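(* Let $d\in\mathbb N$, let $F$ be a countable locally finite structure, $G=\mathrm{Aut}(F)$ (with the pointwise convergence topology), and let $A\in\mathrm{Age}(F)$ be such that $F$ is $A$-homogeneous. If $|M(G)|\le d$, then $F\hookrightarrow(B)^A_{k,d}$ for all $B\in\mathrm{Age}(F)$ and all $k\ge 2$.
   Context: For structures $A,B$, $B^A$ is the set of embeddings of $A$ into $B$. $\mathrm{Age}(F)$ is the class of finitely generated structures embeddable in $F$. $F$ is $A$-homogeneous if for all $a,a'\in F^A$ there is $g\in\mathrm{Aut}(F)$ with $g\circ a=a'$. $M(G)$ is the universal minimal $G$-flow (flows are continuous actions on compact Hausdorff spaces). $F\hookrightarrow(B)^A_{k,d}$ means: for every $\chi:F^A\to\{0,\dots,k-1\}$ there is $b\in F^B$ with $|\chi(\{b\circ a:a\in B^A\})|\le d$. *)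

(* Defs.v *)
From mathcomp Require Import all_boot.
From Stdlib Require Import List.

Set Implicit Arguments.
Unset Strict Implicit.
Unset Printing Implicit Defensive.

Record signature := Signature {
  fsym : Type; farity : fsym -> nat;
  rsym : Type; rarity : rsym -> nat }.

Record structure (L : signature) := Structure {
  carrier :> Type;
  fint : forall f : fsym L, ('I_(farity f) -> carrier) -> carrier;
  rint : forall r : rsym L, ('I_(rarity r) -> carrier) -> Prop }.
Arguments fint {L s} f t.
Arguments rint {L s} r t.

Definition is_embedding (L : signature) (A B : structure L) (h : A -> B) : Prop :=
  (forall x y, h x = h y -> x = y) /\
  (forall f t, h (fint f t) = fint f (h \o t)) /\
  (forall r t, rint r t <-> rint r (h \o t)).

Definition fclosed (L : signature) (A : structure L) (X : A -> Prop) : Prop :=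
  forall f (t : 'I_(farity f) -> A), (forall i, X (t i)) -> X (fint f t).

Definition generated (L : signature) (A : structure L) (S : A -> Prop) (x : A) : Prop :=
  forall X, fclosed X -> (forall y, S y -> X y) -> X x.

Definition finitely_generated (L : signature) (A : structure L) : Prop :=
  exists s : list A, forall x, generated (fun y => List.In y s) x.

Definition finite_pred (T : Type) (X : T -> Prop) : Prop :=
  exists s : list T, forall x, X x -> List.In x s.

Definition locally_finite (L : signature) (A : structure L) : Prop :=
  forall s : list A, finite_pred (generated (fun y => List.In y s)).

Definition countable (T : Type) : Prop :=
  exists f : T -> nat, forall x y, f x = f y -> x = y.

Definition in_age (L : signature) (F A : structure L) : Prop :=
  finitely_generated A /\ exists a : A -> F, is_embedding a.

Record aut (L : signature) (F : structure L) := Aut {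
  aut_fun :> F -> F;
  aut_emb : is_embedding aut_fun;
  aut_surj : forall y, exists x, aut_fun x = y }.

Definition homogeneous_for (L : signature) (F A : structure L) : Prop :=
  forall a a' : A -> F, is_embedding a -> is_embedding a' ->
    exists g : aut F, forall z, g (a z) = a' z.

Definition is_topology (X : Type) (opn : (X -> Prop) -> Prop) : Prop :=
  opn (fun _ => True) /\ opn (fun _ => False) /\
  (forall U V, opn U -> opn V -> opn (fun x => U x /\ V x)) /\
  (forall (I : Type) (U : I -> X -> Prop), (forall i, opn (U i)) ->
     opn (fun x => exists i, U i x)).

Definition compact (X : Type) (opn : (X -> Prop) -> Prop) : Prop :=
  forall (I : Type) (U : I -> X -> Prop), (forall i, opn (U i)) ->
    (forall x, exists i, U i x) ->
    exists l : list I, forall x, exists i, List.In i l /\ U i x.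

Definition hausdorff (X : Type) (opn : (X -> Prop) -> Prop) : Prop :=
  forall x y, x <> y -> exists U V, opn U /\ opn V /\ U x /\ V y /\
    (forall z, U z -> V z -> False).

(* ---------- G-flows, G = Aut(F) with the pointwise convergence topology ----
   Basic neighbourhoods of g in G: {g' | g' z = g z for all z in a finite s}.
   Continuity of the action G x X -> X is stated w.r.t. the product topology. *)

Record flow (L : signature) (F : structure L) := Flow {
  pt : Type;
  opn : (pt -> Prop) -> Prop;
  act : aut F -> pt -> pt;
  flow_topology : is_topology opn;
  flow_compact : compact opn;
  flow_hausdorff : hausdorff opn;
  act_id : forall g : aut F, (forall z, g z = z) -> forall p, act g p = p;
  act_comp : forall g h gh : aut F, (forall z, gh z = g (h z)) ->
               forall p, act gh p = act g (act h p);
  act_cont : forall U, opn U -> forall g p, U (act g p) ->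
      exists (s : list F) (V : pt -> Prop), opn V /\ V p /\
        forall (g' : aut F) p', (forall z, List.In z s -> g' z = g z) ->
          V p' -> U (act g' p') }.

Definition minimal_flow (L : signature) (F : structure L) (X : flow F) : Prop :=
  (exists p : pt X, True) /\
  forall C : pt X -> Prop, opn (fun p => ~ C p) ->
    (forall g p, C p -> C (act g p)) -> (exists p, C p) -> forall p, C p.

Definition factor_map (L : signature) (F : structure L) (Y X : flow F)
    (phi : pt Y -> pt X) : Prop :=
  (forall U, opn U -> opn (fun y => U (phi y))) /\
  (forall g y, phi (act g y) = act g (phi y)) /\
  (forall x, exists y, phi y = x).

Definition universal_minimal (L : signature) (F : structure L) (M : flow F) : Prop :=
  minimal_flow M /\
  forall X : flow F, minimal_flow X -> exists phi, @factor_map L F M X phi.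

Definition card_le (T : Type) (d : nat) : Prop :=
  exists s : list T, (length s <= d)%coq_nat /\ forall x, List.In x s.

Definition arrows (L : signature) (F A B : structure L) (k d : nat) : Prop :=
  forall chi : {a : A -> F | is_embedding a} -> 'I_k,
    exists (b : B -> F) (hb : is_embedding b) (cs : list 'I_k),
      size cs <= d /\
      forall (a : A -> B) (ha : is_embedding a) (hba : is_embedding (b \o a)),
        chi (exist _ (b \o a) hba) \in cs.

(* Main.v *)
Require Import Defs.
From Stdlib Require Import List Classical ClassicalEpsilon FunctionalExtensionality ProofIrrelevance.
From mathcomp Require Import all_boot.

Set Implicit Arguments.
Unset Strict Implicit.
Unset Printing Implicit Defensive.

Lemma In_mem (T : eqType) (x : T) (s : seq T) : List.In x s -> x \in s.
Proof. elim: s => //= y s IH [->|/IH H]; rewrite inE; first by rewrite eqxx. by rewrite H orbT. Qed.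

Lemma mem_In (T : eqType) (x : T) (s : seq T) : x \in s -> List.In x s.
Proof. elim: s => //= y s IH; rewrite inE => /orP [/eqP ->|/IH]; auto. Qed.

Lemma size_length (T : Type) (s : seq T) : size s = length s.
Proof. by elim: s => //= x s ->. Qed.

Lemma le_foldr_In (T : Type) (f : T -> nat) (l : list T) x :
  List.In x l -> f x <= foldr maxn 0 (List.map f l).
Proof.
elim: l => //= y l IH [->|/IH H]; first by rewrite leq_maxl.
exact: (leq_trans H (leq_maxr _ _)).
Qed.

Lemma le_foldr_mem (l : seq nat) x : x \in l -> x <= foldr maxn 0 l.
Proof.
elim: l => //= y l IH; rewrite inE => /orP [/eqP ->|/IH H]; first by rewrite leq_maxl.
exact: (leq_trans H (leq_maxr _ _)).
Qed.

Lemma map_eq_In (T U : Type) (f g : T -> U) (s : seq T) z :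
  map f s = map g s -> List.In z s -> f z = g z.
Proof. elim: s => //= x s IH [E1 E2] [<-|/IH]; auto. Qed.

Lemma map_ext_In' (T U : Type) (f g : T -> U) (s : seq T) :
  (forall z, List.In z s -> f z = g z) -> map f s = map g s.
Proof. elim: s => //= x s IH H; rewrite H /=; [by rewrite IH; auto | auto]. Qed.

Lemma mem_map_In (T : Type) (f : T -> nat) (s : seq T) x :
  x \in map f s -> exists z, List.In z s /\ x = f z.
Proof.
elim: s => //= z s IH; rewrite inE => /orP [/eqP ->|/IH [w [Hw ->]]].
  by exists z; split => //; left.
by exists w; split => //; right.
Qed.

Fixpoint lists (l E : nat) : seq (seq nat) :=
  match l with
  | 0 => [:: [::]]
  | l'.+1 => [seq x :: s | x <- iota 0 E, s <- lists l' E]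
  end.

Lemma in_lists E s : (forall x, x \in s -> x < E) -> s \in lists (size s) E.
Proof.
elim: s => [|x s IH] H /=; first by rewrite inE.
apply: (allpairs_f (fun x s => x :: s)).
  by rewrite mem_iota add0n H // inE eqxx.
by apply: IH => y Hy; apply: H; rewrite inE Hy orbT.
Qed.

Lemma emb_comp (L : signature) (A B C : structure L) (f : A -> B) (h : B -> C) :
  is_embedding f -> is_embedding h -> is_embedding (h \o f).
Proof.
move=> [fi [ff fr]] [hi [hf hr]]; split; [|split].
- by move=> x y /hi /fi.
- by move=> g t /=; rewrite ff hf.
- by move=> r t; rewrite fr hr.
Qed.

Lemma gen_fclosed (L : signature) (A : structure L) (P : A -> Prop) : Defs.fclosed (@generated L A P).
Proof. rewrite /Defs.fclosed /generated => f t H X HX HS; apply: (HX f t) => i; exact: H. Qed.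

Section Main.
Variables (L : signature) (F A : structure L).
Variable eF : F -> nat.
Hypothesis eF_inj : forall x y, eF x = eF y -> x = y.
Variable sA : list A.
Hypothesis gA : forall x, generated (fun y => List.In y sA) x.
Variable k : nat.
Variable chi : {a : A -> F | is_embedding a} -> 'I_k.

Definition I := {a : A -> F | is_embedding a}.
Definition col := I -> 'I_k.

Lemma emb_ext (a a' : A -> F) : is_embedding a -> is_embedding a' ->
  (forall z, List.In z sA -> a z = a' z) -> forall x, a x = a' x.
Proof.
move=> [_ [af _]] [_ [a'f _]] H x; apply: (gA x (X := fun x => a x = a' x)) => //.
move=> f t Ht; rewrite af a'f; congr (fint f _).
by apply: functional_extensionality => i /=; apply: Ht.
Qed.

Lemma I_eq (a b : I) : (forall x, sval a x = sval b x) -> a = b.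
Proof.
case: a => a ha; case: b => b hb /= H.
have E : a = b by apply: functional_extensionality.
subst; f_equal; apply: proof_irrelevance.
Qed.

Definition codeI (a : I) : nat := pickle [seq eF (sval a z) | z <- sA].

Lemma codeI_inj a b : codeI a = codeI b -> a = b.
Proof.
move=> /(pcan_inj (@pickleK _)) E; apply: I_eq; apply: emb_ext; try exact: svalP.
by move=> z Hz; apply: eF_inj; apply: (map_eq_In (f := fun z => eF (sval a z)) E Hz).
Qed.

Definition ginv (g : aut F) (y : F) : F :=
  proj1_sig (constructive_indefinite_description _ (aut_surj g y)).

Lemma ginvK (g : aut F) y : g (ginv g y) = y.
Proof. exact: (proj2_sig (constructive_indefinite_description _ (aut_surj g y))). Qed.

Lemma g_inj (g : aut F) x y : g x = g y -> x = y.
Proof. by case: (aut_emb g) => H _; apply: H. Qed.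

Lemma ginv_g (g : aut F) x : ginv g (g x) = x.
Proof. by apply: (@g_inj g); rewrite ginvK. Qed.

Lemma ginv_emb (g : aut F) : is_embedding (ginv g).
Proof.
case: (aut_emb g) => gi [gf gr]; split; [|split].
- by move=> x y E; rewrite -(ginvK g x) -(ginvK g y) E.
- move=> f t; apply: (@g_inj g); rewrite ginvK gf; congr (fint f _).
  by apply: functional_extensionality => i /=; rewrite ginvK.
- move=> r t; rewrite (gr r (ginv g \o t)).
  have -> : (g \o (ginv g \o t)) = t by apply: functional_extensionality => i /=; rewrite ginvK.
  by [].
Qed.

Definition gI (g : aut F) (a : I) : I := exist _ (ginv g \o sval a) (emb_comp (svalP a) (ginv_emb g)).

Definition act (g : aut F) (c : col) : col := fun a => c (gI g a).

Definition idA : aut F.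
Proof.
refine (@Aut L F (fun x => x) _ _); last by move=> y; exists y.
by split; [|split] => //.
Defined.

Definition compA (g h : aut F) : aut F.
Proof.
refine (@Aut L F (g \o h) (emb_comp (aut_emb h) (aut_emb g)) _).
move=> y; case: (aut_surj g y) => x <-; case: (aut_surj h x) => z <-; by exists z.
Defined.

Lemma act_id0 (g : aut F) : (forall z, g z = z) -> forall c, act g c = c.
Proof.
move=> Hg c; apply: functional_extensionality => a; rewrite /act; congr (c _).
apply: I_eq => x /=; by rewrite -{1}(Hg (sval a x)) ginv_g.
Qed.

Lemma act_comp0 (g h gh : aut F) : (forall z, gh z = g (h z)) ->
  forall c, act gh c = act g (act h c).
Proof.
move=> Hgh c; apply: functional_extensionality => a; rewrite /act; congr (c _).
apply: I_eq => x /=; apply: (@g_inj gh); rewrite ginvK Hgh; by rewrite !ginvK.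
Qed.

Definition eqn n (c c' : col) := forall a, codeI a < n -> c a = c' a.

Lemma eqn_refl n c : eqn n c c. Proof. by []. Qed.
Lemma eqn_sym n c c' : eqn n c c' -> eqn n c' c.
Proof. by move=> H a Ha; rewrite H. Qed.
Lemma eqn_trans n c1 c2 c3 : eqn n c1 c2 -> eqn n c2 c3 -> eqn n c1 c3.
Proof. by move=> H1 H2 a Ha; rewrite H1 ?H2. Qed.
Lemma eqn_mono m n c c' : m <= n -> eqn n c c' -> eqn m c c'.
Proof. by move=> Hmn H a Ha; apply: H; apply: leq_trans Hmn. Qed.

Lemma list_lt n : exists l : list I, forall a, codeI a < n -> List.In a l.
Proof.
elim: n => [|n [l Hl]]; first by exists nil.
case: (classic (exists a, codeI a = n)) => [[a0 Ha0]|Hno].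
- exists (a0 :: l) => a; rewrite ltnS leq_eqVlt => /orP [/eqP E|/Hl]; last by right.
  by left; apply: codeI_inj; rewrite E Ha0.
- exists l => a; rewrite ltnS leq_eqVlt => /orP [/eqP E|/Hl] //.
  by case: Hno; exists a.
Qed.

Definition Ln n : list I := proj1_sig (constructive_indefinite_description _ (list_lt n)).
Lemma LnP n a : codeI a < n -> List.In a (Ln n).
Proof. rewrite /Ln; case: constructive_indefinite_description => l Hl; exact: Hl. Qed.

Lemma cont2 (g : aut F) n : exists (s : list F) m, forall (g' : aut F) c c',
  (forall z, List.In z s -> g' z = g z) -> eqn m c c' -> eqn n (act g' c') (act g c).
Proof.
pose l := Ln n.
exists (List.flat_map (fun a : I => List.map (fun z => ginv g (sval a z)) sA) l).
exists (foldr maxn 0 (List.map (fun a => codeI (gI g a)) l)).+1.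
move=> g' c c' Hs Hm a Ha.
have Hal : List.In a l by apply: LnP.
rewrite /act.
have -> : gI g' a = gI g a.
  apply: I_eq; apply: emb_ext; try exact: svalP.
  move=> z Hz /=.
  have Hin : List.In (ginv g (sval a z)) (List.flat_map (fun a : I => List.map (fun z => ginv g (sval a z)) sA) l).
    by apply/List.in_flat_map; exists a; split => //; apply: (List.in_map (fun z => ginv g (sval a z))).
  have E := Hs _ Hin; rewrite ginvK in E.
  by rewrite -{1}E ginv_g.
symmetry; apply: Hm.
by rewrite ltnS; apply: (le_foldr_In (fun a => codeI (gI g a))).
Qed.

Lemma cont (g : aut F) n : exists m, forall c c', eqn m c c' -> eqn n (act g c) (act g c').
Proof.
case: (cont2 g n) => s [m H]; exists m => c c' E.
by apply: eqn_sym; apply: H.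
Qed.


Definition X (c : col) := forall n, exists g, eqn n (act g chi) c.
Definition clsd (S : col -> Prop) := forall c, (forall n, exists z, S z /\ eqn n z c) -> S c.
Definition invar (S : col -> Prop) := forall g c, S c -> S (act g c).

Lemma X_closed : clsd X.
Proof.
move=> c H n; case: (H n) => z [Xz Ez]; case: (Xz n) => g Eg.
by exists g; apply: eqn_trans Eg Ez.
Qed.

Lemma X_invar : invar X.
Proof.
move=> g c Xc n; case: (cont g n) => m Hm; case: (Xc m) => h Eh.
exists (compA g h); rewrite (@act_comp0 g h (compA g h)) //.
exact: Hm.
Qed.

Lemma X_chi : X chi.
Proof. by move=> n; exists idA; rewrite act_id0. Qed.

Definition Bas (j : nat) (c : col) : Prop :=
  match (unpickle j : option (nat * seq nat)) with
  | Some (n, w) => [seq nat_of_ord (c a) | a <- Ln n] = w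
  | None => False
  end.

Lemma Bas_open j c : Bas j c -> exists n, forall c', eqn n c' c -> Bas j c'.
Proof.
rewrite /Bas; case: (unpickle j) => [[n w]|] // E.
exists (foldr maxn 0 (List.map codeI (Ln n))).+1 => c' Ec'; rewrite -E.
apply: map_ext_In' => a Ha; congr nat_of_ord; apply: Ec'.
by rewrite ltnS; apply: le_foldr_In.
Qed.

Definition GU j c := exists g, Bas j (act g c).

Lemma GU_open j c : GU j c -> exists n, forall c', eqn n c' c -> GU j c'.
Proof.
case=> g /Bas_open [n Hn]; case: (cont g n) => m Hm.
exists m => c' E; exists g; apply: Hn; exact: Hm.
Qed.

Lemma GU_back j h c : GU j (act h c) -> GU j c.
Proof.
case=> g Hg; exists (compA g h); by rewrite (@act_comp0 g h (compA g h)).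
Qed.

Fixpoint Ys (j : nat) (c : col) : Prop :=
  match j with
  | 0 => X c
  | j'.+1 => Ys j' c /\ (~ GU j' c \/ ~ (exists z, Ys j' z /\ ~ GU j' z))
  end.

Definition Y c := forall j, Ys j c.

Lemma Ys_closed j : clsd (Ys j).
Proof.
elim: j => [|j IH]; first exact: X_closed.
move=> c H /=.
have Yc : Ys j c.
  apply: IH => n; case: (H n) => z [[Yz _] Ez]; by exists z.
split => //.
case: (classic (exists z, Ys j z /\ ~ GU j z)) => E; last by right.
left => /GU_open [n Hn]; case: (H n) => z [[_ [Hz|Hz]] Ez] //.
by apply: Hz; apply: Hn.
Qed.

Lemma Ys_invar j : invar (Ys j).
Proof.
elim: j => [|j IH]; first exact: X_invar.
move=> g c /= [Yc [Hc|Hc]]; split; try exact: IH.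
- by left => /GU_back.
- by right.
Qed.

Lemma Ys_ne j : exists c, Ys j c.
Proof.
elim: j => [|j [c Hc]]; first by exists chi; exact: X_chi.
case: (classic (exists z, Ys j z /\ ~ GU j z)) => [[z [Yz Gz]]|E].
- by exists z; split => //; left.
- by exists c; split => //; right.
Qed.

Lemma Ys_dec j j' : j <= j' -> forall c, Ys j' c -> Ys j c.
Proof.
move=> H; rewrite -(subnKC H); elim: (j' - j) => [|i IH] c; first by rewrite addn0.
by rewrite addnS => /= [[/IH]].
Qed.

Lemma Ys_X j c : Ys j c -> X c.
Proof. by move/(Ys_dec (leq0n j)). Qed.

Lemma Y_closed : clsd Y.
Proof.
move=> c H j; apply: Ys_closed => n; case: (H n) => z [Yz Ez]; by exists z.
Qed.

Lemma Y_invar : invar Y.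
Proof. by move=> g c Yc j; apply: Ys_invar. Qed.

Definition upd (r : col) (a : I) (x : 'I_k) : col :=
  fun b => if excluded_middle_informative (b = a) then x else r b.

Lemma split_lem r n : exists R : list col, (forall r', List.In r' R -> eqn n r' r) /\
  forall c, eqn n c r -> exists r', List.In r' R /\ eqn n.+1 c r'.
Proof.
case: (classic (exists a, codeI a = n)) => [[a Ha]|Hno].
- exists (List.map (upd r a) (enum 'I_k)); split.
  + move=> r' /List.in_map_iff [x [<- _]] b Hb; rewrite /upd.
    case: excluded_middle_informative => // E; subst.
    by rewrite ltnn in Hb.
  + move=> c Ec; exists (upd r a (c a)); split.
      by apply: List.in_map; apply: mem_In; rewrite mem_enum.
    move=> b Hb; rewrite /upd; case: excluded_middle_informative => [E|E] /=; first by rewrite E.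
    apply: Ec; move: Hb; rewrite ltnS leq_eqVlt => /orP [/eqP E'|] //.
    by case: E; apply: codeI_inj; rewrite E' Ha.
- exists (r :: nil); split; first by move=> r' [<-|].
  move=> c Ec; exists r; split; first by left.
  move=> b; rewrite ltnS leq_eqVlt => /orP [/eqP E'|]; last exact: Ec.
  by case: Hno; exists b.
Qed.

Lemma konig (P : col -> nat -> Prop) r0 : P r0 0 ->
  (forall r n, P r n -> exists r', eqn n r' r /\ P r' n.+1) ->
  exists y, forall n, exists r, eqn n r y /\ P r n.
Proof.
move=> H0 Hs.
have H : forall n r, exists r', P r n -> eqn n r' r /\ P r' n.+1.
  move=> n r; case: (classic (P r n)) => [/Hs [r' Hr']|Hn]; first by exists r'.
  by exists r.
pose f n r := proj1_sig (constructive_indefinite_description _ (H n r)).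
have fP : forall n r, P r n -> eqn n (f n r) r /\ P (f n r) n.+1.
  move=> n r; rewrite /f; case: constructive_indefinite_description => //.
pose rs := fix rs n := match n with 0 => r0 | n'.+1 => f n' (rs n') end.
have rsP : forall n, P (rs n) n.
  by elim=> [|n IH] //=; case: (fP n (rs n) IH).
have rsE : forall n, eqn n (rs n.+1) (rs n).
  by move=> n /=; case: (fP n (rs n) (rsP n)).
have rsD : forall m d a, codeI a < m -> rs (m + d) a = rs m a.
  move=> m d a Ha; elim: d => [|d IH]; first by rewrite addn0.
  rewrite addnS rsE; first exact: IH.
  exact: leq_trans Ha (leq_addr _ _).
exists (fun a => rs (codeI a).+1 a) => n; exists (rs n); split => //.
move=> a Ha.
have := rsD (codeI a).+1 (n - (codeI a).+1) a (ltnSn _).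
by rewrite subnKC.
Qed.

Definition opnS (S : col -> Prop) (V : {c | S c} -> Prop) :=
  forall y, V y -> exists n, forall y', eqn n (sval y') (sval y) -> V y'.

Arguments opnS : clear implicits.

Lemma compactS (S : col -> Prop) : clsd S -> compact (opnS S).
Proof.
move=> HS Idx U HU Hcov; apply: NNPP => Hno.
pose P r n := ~ exists l : list Idx, forall y : {c | S c},
  eqn n (sval y) r -> exists i, List.In i l /\ U i y.
have P0 : P chi 0.
  move=> [l Hl]; apply: Hno; exists l => x; apply: Hl => a //.
have Ps : forall r n, P r n -> exists r', eqn n r' r /\ P r' n.+1.
  move=> r n Pr; apply: NNPP => Hn; apply: Pr.
  case: (split_lem r n) => R [HR1 HR2].
  have : exists l, forall r', List.In r' R -> forall y : {c | S c},
      eqn n.+1 (sval y) r' -> exists i, List.In i l /\ U i y.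
    clear HR2; elim: R HR1 => [|r1 R IH] HR1; first by exists nil.
    have [l Hl] := IH (fun r' Hr' => HR1 r' (or_intror Hr')).
    have : ~ P r1 n.+1 by move=> Pr1; apply: Hn; exists r1; split => //; apply: HR1; left.
    move/NNPP => [l1 Hl1]; exists (l1 ++ l) => r' Hr'0 y Ey.
    case: Hr'0 => [E0|Hr'].
    - rewrite -E0 in Ey; case: (Hl1 y Ey) => i [Hi Ui]; exists i; split => //; apply: List.in_or_app; left; exact: Hi.
    - case: (Hl r' Hr' y Ey) => i [Hi Ui]; exists i; split => //; apply: List.in_or_app; right; exact: Hi.
  case=> l Hl; exists l => y Ey; case: (HR2 _ Ey) => r' [Hr' E']; exact: Hl r' Hr' y E'.
case: (konig P0 Ps) => y Hy.
have Sy : S y.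
  apply: HS => n; case: (Hy n) => r [Er Pr]; apply: NNPP => Hz; apply: Pr; exists nil => y' E'.
  case: Hz; exists (sval y'); split; first exact: svalP.
  exact: eqn_trans E' Er.
case: (Hcov (exist _ y Sy)) => i Ui.
case: (HU i _ Ui) => n Hn; case: (Hy n) => r [Er Pr]; apply: Pr; exists (i :: nil) => y' E'.
exists i; split; first by left.
apply: Hn; exact: eqn_trans E' Er.
Qed.

Lemma topoS (S : col -> Prop) : is_topology (opnS S).
Proof.
split; [|split; [|split]].
- by move=> y _; exists 0.
- by move=> y.
- move=> U V HU HV y [Uy Vy]; case: (HU y Uy) => n Hn; case: (HV y Vy) => m Hm.
  exists (maxn n m) => y' E; split.
  + by apply: Hn; apply: eqn_mono E; rewrite leq_maxl.
  + by apply: Hm; apply: eqn_mono E; rewrite leq_maxr.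
- move=> Idx U HU y [i Ui]; case: (HU i y Ui) => n Hn; exists n => y' E; exists i; exact: Hn.
Qed.

Lemma sub_eq (S : col -> Prop) (p q : {c | S c}) : sval p = sval q -> p = q.
Proof.
case: p => p hp; case: q => q hq /= E; subst; f_equal; apply: proof_irrelevance.
Qed.

Lemma hausS (S : col -> Prop) : hausdorff (opnS S).
Proof.
move=> x y Hxy.
have [a Ha] : exists a, sval x a <> sval y a.
  apply: NNPP => H; apply: Hxy; apply: sub_eq; apply: functional_extensionality => a.
  by apply: NNPP => Ha; apply: H; exists a.
exists (fun z => eqn (codeI a).+1 (sval z) (sval x)), (fun z => eqn (codeI a).+1 (sval z) (sval y)).
split; [|split; [|split; [|split]]].
- move=> z Ez; exists (codeI a).+1 => z' E; exact: eqn_trans E Ez.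
- move=> z Ez; exists (codeI a).+1 => z' E; exact: eqn_trans E Ez.
- exact: eqn_refl.
- exact: eqn_refl.
- move=> z E1 E2; apply: Ha; rewrite -(E1 a (ltnSn _)); exact: E2 a (ltnSn _).
Qed.

Lemma Y_ne : exists c, Y c.
Proof.
apply: NNPP => Hno.
have := @compactS X X_closed nat (fun j x => ~ Ys j (sval x)).
case.
- move=> j y Hy; apply: NNPP => Hn; apply: Hy; apply: Ys_closed => n.
  apply: NNPP => Hz; apply: Hn; exists n => y' E' Yy'; apply: Hz.
  by exists (sval y'); split.
- move=> x; apply: NNPP => Hx; apply: Hno; exists (sval x) => j.
  by apply: NNPP => Hj; apply: Hx; exists j.
- move=> l Hl; case: (Ys_ne (foldr maxn 0 (List.map id l))) => c Yc.
  case: (Hl (exist _ c (Ys_X Yc))) => i [Hi Ui]; apply: Ui => /=.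
  apply: (Ys_dec _ Yc); exact: (le_foldr_In id Hi).
Qed.

Definition actY (g : aut F) (y : {c | Y c}) : {c | Y c} :=
  exist (fun c => Y c) (act g (sval y)) (Y_invar g (svalP y)).

Lemma actY_id : forall g : aut F, (forall z, g z = z) -> forall p, actY g p = p.
Proof. move=> g Hg p; apply: sub_eq; exact: act_id0. Qed.

Lemma actY_comp : forall g h gh : aut F, (forall z, gh z = g (h z)) ->
  forall p, actY gh p = actY g (actY h p).
Proof. move=> g h gh H p; apply: sub_eq; exact: act_comp0. Qed.

Lemma actY_cont : forall U, opnS Y U -> forall g p, U (actY g p) ->
  exists (s : list F) (V : {c | Y c} -> Prop), opnS Y V /\ V p /\
    forall (g' : aut F) p', (forall z, List.In z s -> g' z = g z) ->
      V p' -> U (actY g' p').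
Proof.
move=> U HU g p Hp; case: (HU _ Hp) => n Hn; case: (cont2 g n) => s [m Hm].
exists s, (fun p' => eqn m (sval p) (sval p')); split; [|split].
- move=> y Ey; exists m => y' E'; exact: eqn_trans Ey (eqn_sym E').
- exact: eqn_refl.
- move=> g' p' Hs E; apply: Hn; exact: Hm.
Qed.

Definition FY : flow F :=
  @Flow L F {c | Y c} (opnS Y) actY (@topoS Y) (compactS Y_closed) (@hausS Y)
    actY_id actY_comp actY_cont.

Lemma FY_min : minimal_flow FY.
Proof.
split; first by case: Y_ne => c Yc; exists (exist _ c Yc).
move=> C HC Cinv [c0 Cc0] p; apply: NNPP => Cp.
case: (HC p Cp) => n Hn.
pose w := [seq nat_of_ord (sval p a) | a <- Ln n]; pose j := pickle (n, w).
have BasE : forall c, Bas j c -> eqn n c (sval p).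
  move=> c; rewrite /Bas pickleK => E a Ha; apply: ord_inj.
  exact: (map_eq_In (f := fun a => nat_of_ord (c a)) E (LnP Ha)).
have notGU : ~ GU j (sval c0).
  case=> g Hg; apply: (Hn (actY g c0) (BasE _ Hg)); exact: (Cinv g c0 Cc0).
case: (svalP p j.+1) => _ [Hp|Hp]; last by apply: Hp; exists (sval c0); split => //; exact: (svalP c0 j).
apply: Hp; exists idA; rewrite act_id0 //; by rewrite /Bas pickleK.
Qed.

Lemma final (d : nat) (a0 : A -> F) (ha0 : is_embedding a0)
  (hhom : homogeneous_for F A)
  (ys : list {c | Y c}) (Hys : forall y, List.In y ys) (Hd : (length ys <= d)%coq_nat)
  (B : structure L) (b0 : B -> F) (hb0 : is_embedding b0) (lF : list F)
  (HlF : forall x : B, List.In (b0 x) lF) :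
  exists (b : B -> F) (hb : is_embedding b) (cs : list 'I_k),
      size cs <= d /\
      forall (a : A -> B) (ha : is_embedding a) (hba : is_embedding (b \o a)),
        chi (exist _ (b \o a) hba) \in cs.
Proof.
case: Y_ne => c0 Yc0; pose p0 := exist (fun c => Y c) c0 Yc0.
pose a0I : I := exist _ a0 ha0.
have Hom : forall a : I, exists y, List.In y ys /\ c0 a = sval y a0I.
  move=> a; case: (hhom (sval a) a0 (svalP a) ha0) => h Hh.
  exists (actY h p0); split => //=.
  rewrite /act /=; congr c0; apply: I_eq => x /=; by rewrite -Hh ginv_g.
pose E := (foldr maxn 0 (List.map eF lF)).+1.
pose N := (foldr maxn 0 (map pickle (lists (size sA) E))).+1.
case: (Yc0 0 N) => g Hg.
exists (ginv g \o b0), (emb_comp hb0 (ginv_emb g)), (List.map (fun y => sval y a0I) ys).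
split.
  by rewrite size_length List.length_map; apply/leP.
move=> a ha hba.
pose ba : I := exist _ (b0 \o a) (emb_comp ha hb0).
have -> : chi (exist _ (ginv g \o b0 \o a) hba) = act g chi ba.
  by rewrite /act; congr chi; apply: I_eq.
rewrite Hg; last first.
  rewrite /codeI ltnS; apply: le_foldr_mem; apply: map_f.
  rewrite -{1}(size_map (fun z => eF (sval ba z)) sA); apply: in_lists; move=> x; case/mem_map_In => z [_ ->].
  by rewrite ltnS; apply: (le_foldr_In eF (HlF (a z))).
case: (Hom ba) => y [Hy ->]; apply: In_mem.
exact: (List.in_map (fun y => sval y a0I)).
Qed.
End Main.

Lemma genB (L : signature) (B F : structure L) (b0 : B -> F) (sB : list B) :
  is_embedding b0 -> (forall x, generated (fun y => List.In y sB) x) ->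
  forall x, generated (fun y => List.In y (List.map b0 sB)) (b0 x).
Proof.
move=> [_ [hf _]] gB x.
apply: (gB x (fun x => generated (fun y => List.In y (List.map b0 sB)) (b0 x))).
- move=> f t Ht; rewrite hf; exact: (@gen_fclosed L F _ f (b0 \o t) Ht).
- move=> y Hy X HX HS; apply: HS; exact: List.in_map.
Qed.

Theorem mainTheorem12 (d : nat) (L : signature) (F : structure L)
  (hcount : countable F) (hlf : locally_finite F)
  (A : structure L) (hA : in_age F A) (hhom : homogeneous_for F A)
  (hM : exists M : flow F, universal_minimal M /\ card_le (pt M) d) :
  forall B : structure L, in_age F B ->
  forall k : nat, 2 <= k -> arrows F A B k d.
Proof.
move=> B [[sB gB] [b0 hb0]] k hk chi.
case: hA => [[sA gA] [a0 ha0]].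
case: hcount => eF eF_inj.
case: hM => M [[Mmin Muniv] [ms [Hms Hmsall]]].
case: (Muniv _ (FY_min eF_inj gA chi)) => phi [_ [_ phis]].
case: (hlf (List.map b0 sB)) => lF HlF.
apply: (@final L F A eF eF_inj sA gA k chi d a0 ha0 hhom (List.map phi ms) _ _ B b0 hb0 lF).
- move=> y; case: (phis y) => m <-; apply: List.in_map; exact: Hmsall.
- by rewrite List.length_map.
- move=> x; apply: HlF; exact: genB.
Qed.
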